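(* In the two-block Spice setting, at any iteration $k$ (with $\mathsf{R}(u^k)>0$ and $\mathsf{R}(\bar u^k)>0$), $H_k=Q_kM_k^{-1}\succ0$ and $G_k=Q_k^\top+Q_k-M_k^\top H_kM_k\succ0$ (with $H_k$, $G_k$ equal to the explicit matrices given in the context), and $$\rho[\vartheta(u)-\vartheta(\bar u^k)]+(w-\bar w^k)^\top\tfrac{1}{\eta_k}\Gamma(\bar w^k)\ \ge\ \tfrac12\big(\|w-w^{k+1}\|_{H_k}^2-\|w-w^k\|_{H_k}^2\big)+\tfrac12\|\bar w^k-w^k\|_{G_k}^2\qquad\forall\,w\in\Omega .$$
   Context: Two-block Spice setting. Let $\mathcal{X}\subseteq\mathbb{R}^n$, $\mathcal{Y}\subseteq\mathbb{R}^m$ be nonempty closed convex sets; $f:\mathbb{R}^n\to\mathbb{R}$, $g:\mathbb{R}^m\to\mathbb{R}$ convex; $\phi_1,\dots,\phi_p:\mathbb{R}^n\to\mathbb{R}$ and $\psi_1,\dots,\psi_p:\mathbb{R}^m\to\mathbb{R}$ convex and continuously differentiable; $\Phi=(\phi_1,\dots,\phi_p)^\top$, $\Psi=(\psi_1,\dots,\psi_p)^\top$ with Jacobians $\mathcal{D}\Phi(x)\in\mathbb{R}^{p\times n}$, $\mathcal{D}\Psi(y)\in\mathbb{R}^{p\times m}$. Let $\mathcal{Z}=\mathbb{R}^p_+$, $\Omega=\mathcal{X}\times\mathcal{Y}\times\mathcal{Z}$, $u=(x,y)$, $w=(x,y,\lambda)$, $\vartheta(u)=f(x)+g(y)$, $\Gamma(w)=(\mathcal{D}\Phi(x)^\top\lambda,\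 \mathcal{D}\Psi(y)^\top\lambda,\ -\Phi(x)-\Psi(y))$. For symmetric $A$, $\|v\|_A^2:=v^\top Av$; matrix norms are spectral norms; $\mathsf{R}(u):=\|\mathcal{D}\Phi(x)\|^2+\|\mathcal{D}\Psi(y)\|^2$. Fix $\rho>0$, $\mu>1$, $w^0=(x^0,y^0,\lambda^0)\in\Omega$ and positive $\eta_0,\eta_1,\dots$. Given $w^k=(x^k,y^k,\lambda^k)$, iteration $k$ is: $r_k=\frac{1}{\eta_k}\sqrt{\mathsf{R}(u^k)}$; $\bar x^k=\arg\min_{x\in\mathcal{X}}\{\rho f(x)+\frac{1}{\eta_k}(\lambda^k)^\top\Phi(x)+\frac{r_k}{2}\|x-x^k\|^2\}$; $\bar y^k=\arg\min_{y\in\mathcal{Y}}\{\rho g(y)+\frac{1}{\eta_k}(\lambda^k)^\top\Psi(y)+\frac{r_k}{2}\|y-y^k\|^2\}$; $\bar u^k=(\bar x^k,\bar y^k)$; $s_k=\frac{\mu\mathsf{R}(\bar u^k)}{\eta_k\sqrt{\mathsf{R}(u^k)}}$; $\bar\lambda^k=\arg\max_{\lambda\in\mathcal{Z}}\{\frac{1}{\eta_k}\lambda^\top[\Phi(\bar x^k)+\Psi(\bar y^k)]-\frac{s_k}{2}\|\lambda-\lambda^k\|^2\}=\max\{\lambda^k+\frac{1}{\eta_ks_k}(\Phi(\bar x^k)+\Psi(\bar y^k)),0\}$; $\bar w^k=(\bar x^k,\bar y^k,\bar\lambda^k)$; $w^{k+1}=w^k-M_k(w^k-\bar w^k)$ with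 $M_k=\begin{pmatrix}I_n&0&-\frac{1}{\eta_kr_k}\mathcal{D}\Phi(\bar x^k)^\top\\0&I_m&-\frac{1}{\eta_kr_k}\mathcal{D}\Psi(\bar y^k)^\top\\0&0&I_p\end{pmatrix}$. It is assumed that $\mathsf{R}(u^k)>0$, $\mathsf{R}(\bar u^k)>0$ for all $k$. Define $Q_k=\begin{pmatrix}r_kI_n&0&-\frac{1}{\eta_k}\mathcal{D}\Phi(\bar x^k)^\top\\0&r_kI_m&-\frac{1}{\eta_k}\mathcal{D}\Psi(\bar y^k)^\top\\0&0&s_kI_p\end{pmatrix}$, $H_k=\mathrm{diag}(r_kI_n,r_kI_m,s_kI_p)$, $G_k=\mathrm{diag}\big(r_kI_n,\ r_kI_m,\ s_kI_p-\frac{1}{\eta_k^2r_k}[\mathcal{D}\Phi(\bar x^k)\mathcal{D}\Phi(\bar x^k)^\top+\mathcal{D}\Psi(\bar y^k)\mathcal{D}\Psi(\bar y^k)^\top]\big)$. *)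

(* Defs.v *)
From HB Require Import structures.
From mathcomp Require Import all_boot all_order all_algebra.
From mathcomp Require Import all_classical all_reals all_analysis.
Set Implicit Arguments. Unset Strict Implicit. Unset Printing Implicit Defensive.
Import Order.TTheory GRing.Theory Num.Theory.
Import numFieldNormedType.Exports.
Local Open Scope classical_set_scope.
Local Open Scope ring_scope.

Definition jac (R : realType) (n p : nat) (phi : 'I_p -> 'cV[R]_n -> R)
  (x : 'cV[R]_n) : 'M[R]_(p, n) :=
  \matrix_(i < p, j < n) ('d (phi i) x (delta_mx j 0 : 'cV[R]_n) : R).

Definition convex_C1 (R : realType) (n p : nat) (phi : 'I_p -> 'cV[R]_n -> R)
  : Prop :=
  (forall i, convex_function setT (phi i)) /\
  (forall i x, differentiable (phi i) x) /\
  (forall i j, continuous (fun x => jac phi x i j)).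

Definition vfun (R : realType) (n p : nat) (phi : 'I_p -> 'cV[R]_n -> R)
  (x : 'cV[R]_n) : 'cV[R]_p := \col_(i < p) phi i x.

Definition enorm (R : realType) (n : nat) (v : 'cV[R]_n) : R :=
  Num.sqrt (\sum_(i < n) v i 0 ^+ 2).

Definition specnorm (R : realType) (p n : nat) (A : 'M[R]_(p, n)) : R :=
  sup [set enorm (A *m v) | v in [set v : 'cV[R]_n | enorm v <= 1]].

Definition qf (R : realType) (N : nat) (A : 'M[R]_N) (v : 'cV[R]_N) : R :=
  (v^T *m A *m v) 0 0.

Definition posdef (R : realType) (N : nat) (A : 'M[R]_N) : Prop :=
  A^T = A /\ forall v : 'cV[R]_N, v != 0 -> 0 < qf A v.

Definition wvec (R : realType) (n m p : nat) (x : 'cV[R]_n) (y : 'cV[R]_m)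
  (l : 'cV[R]_p) : 'cV[R]_(n + m + p) := col_mx (col_mx x y) l.

Definition nonneg (R : realType) (p : nat) (l : 'cV[R]_p) : Prop :=
  forall i, 0 <= l i 0.

Definition Rfun (R : realType) (n m p : nat) (phi : 'I_p -> 'cV[R]_n -> R)
  (psi : 'I_p -> 'cV[R]_m -> R) (x : 'cV[R]_n) (y : 'cV[R]_m) : R :=
  specnorm (jac phi x) ^+ 2 + specnorm (jac psi y) ^+ 2.

Definition Gamma (R : realType) (n m p : nat) (phi : 'I_p -> 'cV[R]_n -> R)
  (psi : 'I_p -> 'cV[R]_m -> R) (x : 'cV[R]_n) (y : 'cV[R]_m) (l : 'cV[R]_p)
  : 'cV[R]_(n + m + p) :=
  wvec ((jac phi x)^T *m l) ((jac psi y)^T *m l) (- vfun phi x - vfun psi y).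

(* M_k, Q_k, H_k, G_k, block form with blocks of sizes n, m, p;
   JX = DPhi(xbar^k), JY = DPsi(ybar^k) *)
Definition Mmat (R : realType) (n m p : nat) (eta r : R)
  (JX : 'M[R]_(p, n)) (JY : 'M[R]_(p, m)) : 'M[R]_(n + m + p) :=
  block_mx (block_mx 1%:M 0 0 1%:M) (- (eta * r)^-1 *: col_mx JX^T JY^T)
           0 1%:M.

Definition Qmat (R : realType) (n m p : nat) (eta r s : R)
  (JX : 'M[R]_(p, n)) (JY : 'M[R]_(p, m)) : 'M[R]_(n + m + p) :=
  block_mx (block_mx (r%:M) 0 0 (r%:M)) (- eta^-1 *: col_mx JX^T JY^T)
           0 (s%:M).

Definition Hmat (R : realType) (n m p : nat) (r s : R) : 'M[R]_(n + m + p) :=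
  block_mx (block_mx (r%:M) 0 0 (r%:M)) 0 0 (s%:M).

Definition Gmat (R : realType) (n m p : nat) (eta r s : R)
  (JX : 'M[R]_(p, n)) (JY : 'M[R]_(p, m)) : 'M[R]_(n + m + p) :=
  block_mx (block_mx (r%:M) 0 0 (r%:M)) 0 0
    (s%:M - (eta ^+ 2 * r)^-1 *: (JX *m JX^T + JY *m JY^T)).

(* Main.v *)
Require Import Defs.
From HB Require Import structures.
From mathcomp Require Import all_boot all_order all_algebra.
From mathcomp Require Import all_classical all_reals all_analysis.
From mathcomp Require Import ring lra.
Import Order.TTheory GRing.Theory Num.Theory.
Import numFieldNormedType.Exports.
Local Open Scope classical_set_scope.
Local Open Scope ring_scope.
Set Implicit Arguments. Unset Strict Implicit. Unset Printing Implicit Defensive.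
Section S.
Variable R : realType.

Definition dot (k : nat) (a b : 'cV[R]_k) : R := (a^T *m b) 0 0.

Lemma dotE k (a b : 'cV[R]_k) : dot a b = \sum_i a i 0 * b i 0.
Proof. by rewrite /dot !mxE; apply: eq_bigr => i _; rewrite mxE. Qed.

Lemma dotC k (a b : 'cV[R]_k) : dot a b = dot b a.
Proof. by rewrite !dotE; apply: eq_bigr => i _; rewrite mulrC. Qed.

Lemma dotDl k (a b c : 'cV[R]_k) : dot (a + b) c = dot a c + dot b c.
Proof. by rewrite !dotE -big_split; apply: eq_bigr => i _; rewrite mxE mulrDl. Qed.

Lemma dotDr k (a b c : 'cV[R]_k) : dot c (a + b) = dot c a + dot c b.
Proof. by rewrite dotC dotDl !(dotC c). Qed.

Lemma dotZl k x (a c : 'cV[R]_k) : dot (x *: a) c = x * dot a c.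
Proof. by rewrite !dotE mulr_sumr; apply: eq_bigr => i _; rewrite mxE mulrA. Qed.

Lemma dotZr k x (a c : 'cV[R]_k) : dot c (x *: a) = x * dot c a.
Proof. by rewrite dotC dotZl dotC. Qed.

Lemma dotNl k (a c : 'cV[R]_k) : dot (- a) c = - dot a c.
Proof. by rewrite -scaleN1r dotZl mulN1r. Qed.

Lemma dotNr k (a c : 'cV[R]_k) : dot c (- a) = - dot c a.
Proof. by rewrite dotC dotNl dotC. Qed.

Lemma dotBl k (a b c : 'cV[R]_k) : dot (a - b) c = dot a c - dot b c.
Proof. by rewrite dotDl dotNl. Qed.

Lemma dotBr k (a b c : 'cV[R]_k) : dot c (a - b) = dot c a - dot c b.
Proof. by rewrite dotDr dotNr. Qed.

Lemma dot_ge0 k (a : 'cV[R]_k) : 0 <= dot a a.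
Proof. by rewrite dotE sumr_ge0 // => i _; rewrite -expr2 sqr_ge0. Qed.

Lemma enorm_ge0 k (a : 'cV[R]_k) : 0 <= enorm a.
Proof. exact: sqrtr_ge0. Qed.

Lemma enorm_sq k (a : 'cV[R]_k) : enorm a ^+ 2 = dot a a.
Proof.
rewrite /enorm sqr_sqrtr; last by apply: sumr_ge0 => i _; rewrite sqr_ge0.
by rewrite dotE; apply: eq_bigr => i _; rewrite expr2.
Qed.

Lemma dot_mull k l (A : 'M[R]_(k, l)) (a : 'cV[R]_l) (b : 'cV[R]_k) :
  dot (A *m a) b = dot a (A^T *m b).
Proof. by rewrite /dot trmx_mul mulmxA. Qed.

Lemma colsum k (v : 'cV[R]_k) : v = \sum_(j < k) v j 0 *: delta_mx j 0.
Proof.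
rewrite {1}(matrix_sum_delta v); apply: eq_bigr => j _.
by rewrite big_ord1.
Qed.

Lemma convE k (x y : 'cV[R]_k) (t : {i01 R}) :
  (conv t (x : convex_lmodType 'cV[R]_k) y : 'cV[R]_k) = t%:num *: x + (1 - t%:num) *: y.
Proof. reflexivity. Qed.

Lemma convRE' (x y : R) (t : {i01 R}) :
  (conv t (x : convex_lmodType R^o) y : R) = t%:num * x + (1 - t%:num) * y.
Proof. reflexivity. Qed.

Lemma mk01 (h : R) : 0 <= h -> h <= 1 -> exists t : {i01 R}, t%:num = h.
Proof.
move=> h0 h1.
have sp : Itv.spec (@Itv.num_sem _) (Itv.Real `[0%Z, 1%Z]) h.
  by rewrite /Itv.spec /Itv.num_sem /= num_real in_itv /= h0 h1.
by exists (Itv.mk sp).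
Qed.

Lemma jac_dot n p (phi : 'I_p -> 'cV[R]_n -> R) (xb v : 'cV[R]_n) (l : 'cV[R]_p) :
  dot v ((jac phi xb)^T *m l) = \sum_i l i 0 * 'd (phi i) xb v.
Proof.
rewrite dotC dotE.
under eq_bigr do rewrite mxE.
under [RHS]eq_bigr => i _.
  rewrite {1}(colsum v) linear_sum mulr_sumr.
  under eq_bigr do rewrite linearZ /=.
over.
rewrite exchange_big /=; apply: eq_bigr => j _.
rewrite mulr_suml; apply: eq_bigr => i _; rewrite !mxE /=.
rewrite [RHS]mulrC; rewrite -[_ *: _]/(_ * _). by rewrite mulrAC [_ * v j 0]mulrC.
Qed.

Lemma enorm_sqexp k (h : R) (d a b : 'cV[R]_k) :
  enorm (h *: d + (a - b)) ^+ 2 = h ^+ 2 * dot d d + 2 * h * dot d (a - b) + enorm (a - b) ^+ 2.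
Proof.
move: (a - b) => c.
rewrite !enorm_sq !(dotDl, dotDr, dotZl, dotZr) (dotC c d); ring.
Qed.

Lemma opt n p (X : set 'cV[R]_n) (f : 'cV[R]_n -> R) (phi : 'I_p -> 'cV[R]_n -> R)
  (rho c r : R) (l : 'cV[R]_p) (xs xb : 'cV[R]_n) :
  convex_set X -> convex_function setT f -> (forall i x, differentiable (phi i) x) ->
  0 <= rho -> X xb ->
  (forall x, X x ->
     rho * f xb + c * (l^T *m vfun phi xb) 0 0 + r / 2 * enorm (xb - xs) ^+ 2
     <= rho * f x + c * (l^T *m vfun phi x) 0 0 + r / 2 * enorm (x - xs) ^+ 2) ->
  forall x, X x ->
  0 <= rho * (f x - f xb) + c * dot (x - xb) ((jac phi xb)^T *m l)
       + r * dot (x - xb) (xb - xs).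
Proof.
move=> cX cf dphi rho0 Xb hmin x Xx.
set d := x - xb.
pose F := fun z => (l^T *m vfun phi z) 0 0.
have FE : forall z, F z = \sum_i l i 0 * phi i z.
  by move=> z; rewrite /F !mxE; apply: eq_bigr => i _; rewrite !mxE.
pose A := rho * (f x - f xb) + r * dot d (xb - xs).
pose L := dot d ((jac phi xb)^T *m l).
pose q := fun h : R => \sum_i l i 0 * (h^-1 *: ((phi i \o shift xb) (h *: d) - phi i xb)).
pose G := fun h : R => A + c * q h + (r / 2 * dot d d) * h.
have LE : L = \sum_i l i 0 * 'd (phi i) xb d by rewrite /L jac_dot.
have cvgG : G @ 0^'+ --> A + c * L + (r / 2 * dot d d) * 0.
  apply: cvgD; first apply: cvgD.
  - exact: cvg_cst.
  - apply: cvgMl_tmp; rewrite LE.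
    apply: cvg_big => [|i _]; first exact: add_continuous.
    apply: cvgMl_tmp.
    rewrite -deriveE //.
    apply: cvg_dnbhs_at_right.
    exact: (@diff_derivable _ _ _ _ xb d (dphi i xb)).
  - apply: cvgMl_tmp.
    apply: cvg_at_right_filter; exact: cvg_id.
have ev : \forall h \near 0^'+, 0 <= G h.
  near=> h.
  have h0 : 0 < h by near: h; exact: nbhs_right_gt.
  have h1 : h < 1 by near: h; exact: nbhs_right_lt.
  have [t tE] := mk01 (ltW h0) (ltW h1).
  have zE : (conv t (x : convex_lmodType 'cV[R]_n) xb : 'cV[R]_n) = h *: d + xb.
    rewrite convE tE /d scalerBr scalerBl scale1r.
    by rewrite addrCA addrC.
  have Xz : X (h *: d + xb).
    rewrite -zE; apply: set_mem; apply: cX; exact: mem_set.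
  have fz : f (h *: d + xb) <= h * f x + (1 - h) * f xb.
    rewrite -zE -tE -convRE'; apply: cf; by rewrite inE.
  have mz := hmin _ Xz.
  have ez : enorm (h *: d + xb - xs) ^+ 2 = h ^+ 2 * dot d d + 2 * h * dot d (xb - xs) + enorm (xb - xs) ^+ 2.
    by rewrite -addrA enorm_sqexp.
  have qh : q h = h^-1 * (F (h *: d + xb) - F xb).
    rewrite /q !FE -sumrB mulr_sumr; apply: eq_bigr => i _.
    rewrite /= /shift -[_ *: _]/(_ * _).
    ring.
  rewrite -(pmulr_rge0 _ h0).
  have -> : h * G h = h * A + c * (F (h *: d + xb) - F xb) + r / 2 * dot d d * h ^+ 2.
    rewrite /G qh; field; exact: lt0r_neq0.
  rewrite /A.
  rewrite ez /F in mz.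
  move: mz fz; rewrite -/(F xb) -/(F (h *: d + xb)).
  set a1 := F _; set a2 := F _.
  move=> mz fz.
  have : rho * f (h *: d + xb) <= rho * (h * f x + (1 - h) * f xb) by apply: ler_wpM2l.
  nra.
have H := cvgr_to_ge cvgG ev.
move: H; rewrite mulr0 addr0 /A /L => /(_ (at_right_proper_filter 0)); lra.
Unshelve. all: by end_near.
Qed.

End S.
Section S2.
Variable R : realType.




Lemma dot0 k (a : 'cV[R]_k) : dot a a = 0 -> a = 0.
Proof.
rewrite dotE => /psumr_eq0P H; apply/matrixP => i j; rewrite ord1 !mxE.
have /eqP := H (fun i _ => (le_trans (lexx _) (sqr_ge0 (a i 0)))) i isT.
by rewrite -expr2 sqrf_eq0 => /eqP.
Qed.

Lemma enorm0 k (a : 'cV[R]_k) : enorm a = 0 -> a = 0.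
Proof. by move=> h; apply: dot0; rewrite -enorm_sq h expr0n. Qed.

Lemma enorm_0 k : enorm (0 : 'cV[R]_k) = 0.
Proof. by rewrite /enorm big1 ?sqrtr0 // => i _; rewrite mxE expr0n. Qed.

Lemma CS k (a b : 'cV[R]_k) : dot a b <= enorm a * enorm b.
Proof.
have [ha|ha] := eqVneq (enorm a) 0.
  by rewrite (enorm0 ha) /dot trmx0 mul0mx mxE enorm_0 mul0r.
have [hb|hb] := eqVneq (enorm b) 0.
  by rewrite (enorm0 hb) /dot mulmx0 mxE enorm_0 mulr0.
have pa : 0 < enorm a by rewrite lt0r ha enorm_ge0.
have pb : 0 < enorm b by rewrite lt0r hb enorm_ge0.
have := dot_ge0 (enorm b *: a - enorm a *: b).
rewrite !(dotBl, dotBr, dotZl, dotZr) -!enorm_sq (dotC b a).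
move=> h.
have : 0 <= 2 * (enorm a * enorm b) * (enorm a * enorm b - dot a b) by nra.
rewrite pmulr_rge0 ?subr_ge0 // mulr_gt0 // mulr_gt0 //.
Qed.

Lemma enormZ k c (a : 'cV[R]_k) : enorm (c *: a) = `|c| * enorm a.
Proof.
apply: (@pexpIrn _ 2) => //; rewrite ?nnegrE ?mulr_ge0 ?enorm_ge0 //.
by rewrite exprMn !enorm_sq dotZl dotZr real_normK ?num_real // mulrA expr2.
Qed.

Lemma row_dot k l (A : 'M[R]_(k, l)) (v : 'cV[R]_l) i :
  (A *m v) i 0 = dot (row i A)^T v.
Proof. by rewrite dotE mxE; apply: eq_bigr => j _; rewrite !mxE. Qed.

Lemma specnorm_ub k l (A : 'M[R]_(k, l)) :
  has_ubound [set enorm (A *m v) | v in [set v : 'cV[R]_l | enorm v <= 1]].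
Proof.
exists (Num.sqrt (\sum_i enorm (row i A)^T ^+ 2)) => _ [v /= hv <-].
rewrite /enorm; apply: ler_wsqrtr.
apply: ler_sum => i _.
have h1 := CS (row i A)^T v.
have h2 := CS (- (row i A)^T) v.
rewrite dotNl in h2.
have e1 : enorm (- (row i A)^T) = enorm (row i A)^T.
  by rewrite -scaleN1r enormZ normrN1 mul1r.
rewrite e1 in h2.
have h0 := enorm_ge0 (row i A)^T.
have hv0 := enorm_ge0 v.
rewrite row_dot -/(enorm _).
have hh : enorm (row i A)^T * enorm v <= enorm (row i A)^T by nra.
nra.
Qed.

Lemma specnorm_ge0 k l (A : 'M[R]_(k, l)) : 0 <= specnorm A.
Proof.
apply: (ub_le_sup (specnorm_ub A)).
by exists 0 => /=; rewrite ?mulmx0 enorm_0.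
Qed.

Lemma specnorm_le k l (A : 'M[R]_(k, l)) (u : 'cV[R]_l) :
  enorm (A *m u) <= specnorm A * enorm u.
Proof.
have [hu|hu] := eqVneq (enorm u) 0.
  by rewrite (enorm0 hu) mulmx0 !enorm_0 mulr0.
have pu : 0 < enorm u by rewrite lt0r hu enorm_ge0.
have : enorm (A *m ((enorm u)^-1 *: u)) <= specnorm A.
  apply: (ub_le_sup (specnorm_ub A)); exists ((enorm u)^-1 *: u) => //=.
  by rewrite enormZ ger0_norm ?invr_ge0 ?enorm_ge0 // mulVf.
rewrite -scalemxAr enormZ ger0_norm ?invr_ge0 ?enorm_ge0 //.
by rewrite ler_pdivrMl // mulrC.
Qed.

End S2.
Section S3.
Variable R : realType.
Variables n m p : nat.
Implicit Types (a : 'cV[R]_n) (b : 'cV[R]_m) (c : 'cV[R]_p).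

Lemma wvecB (a a2 : 'cV[R]_n) (b b2 : 'cV[R]_m) (c c2 : 'cV[R]_p) :
  wvec a b c - wvec a2 b2 c2 = wvec (a - a2) (b - b2) (c - c2).
Proof. by rewrite /wvec !opp_col_mx !add_col_mx. Qed.

Lemma dot_wvec (a a2 : 'cV[R]_n) (b b2 : 'cV[R]_m) (c c2 : 'cV[R]_p) :
  dot (wvec a b c) (wvec a2 b2 c2) = dot a a2 + dot b b2 + dot c c2.
Proof. by rewrite /dot /wvec !tr_col_mx !mul_row_col !mxE. Qed.

Lemma qfE k (A : 'M[R]_k) v : qf A v = dot v (A *m v).
Proof. by rewrite /qf /dot mulmxA. Qed.

Lemma Hmul r s a b c :
  Hmat n m p r s *m wvec a b c = wvec (r *: a) (r *: b) (s *: c).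
Proof.
rewrite /Hmat /wvec !mul_block_col !mul0mx !addr0 !add0r !mul_scalar_mx.
by [].
Qed.

Lemma qf_H r s a b c :
  qf (Hmat n m p r s) (wvec a b c) = r * dot a a + r * dot b b + s * dot c c.
Proof. by rewrite qfE Hmul dot_wvec !dotZr. Qed.

Lemma Mmul eta r (JX : 'M[R]_(p, n)) (JY : 'M[R]_(p, m)) a b c :
  Mmat eta r JX JY *m wvec a b c =
  wvec (a - (eta * r)^-1 *: (JX^T *m c)) (b - (eta * r)^-1 *: (JY^T *m c)) c.
Proof.
rewrite /Mmat /wvec !mul_block_col !mul0mx ?add0r !mul1mx ?addr0.
by rewrite -scalemxAl mul_col_mx scale_col_mx add_col_mx !scaleNr.
Qed.

Lemma Gmul eta r s (JX : 'M[R]_(p, n)) (JY : 'M[R]_(p, m)) a b c :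
  Gmat eta r s JX JY *m wvec a b c =
  wvec (r *: a) (r *: b)
    (s *: c - (eta ^+ 2 * r)^-1 *: (JX *m (JX^T *m c) + JY *m (JY^T *m c))).
Proof.
rewrite /Gmat /wvec !mul_block_col !mul0mx !addr0 !add0r !mul_scalar_mx.
by rewrite mulmxBl mul_scalar_mx -scalemxAl mulmxDl !mulmxA.
Qed.

Lemma qf_G eta r s (JX : 'M[R]_(p, n)) (JY : 'M[R]_(p, m)) a b c :
  qf (Gmat eta r s JX JY) (wvec a b c) =
  r * dot a a + r * dot b b + s * dot c c
  - (eta ^+ 2 * r)^-1 * (dot (JX^T *m c) (JX^T *m c) + dot (JY^T *m c) (JY^T *m c)).
Proof.
rewrite qfE Gmul dot_wvec !(dotZr, dotBr, dotDr) -!dot_mull.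
by rewrite !(dotC c); ring.
Qed.

End S3.
Section S4.
Variable R : realType.
Variables n m p : nat.

Lemma blk1 (x : R) : block_mx (x%:M : 'M[R]_n) 0 0 (x%:M : 'M[R]_m) = x%:M.
Proof. by rewrite scalar_mx_block. Qed.

Lemma M_unit eta r (JX : 'M[R]_(p, n)) (JY : 'M[R]_(p, m)) :
  Mmat eta r JX JY \in unitmx.
Proof. by rewrite unitmxE /Mmat det_ublock blk1 !det1 mulr1 unitr1. Qed.

Lemma QHM eta r s (JX : 'M[R]_(p, n)) (JY : 'M[R]_(p, m)) : r != 0 ->
  Qmat eta r s JX JY = Hmat n m p r s *m Mmat eta r JX JY.
Proof.
move=> r0.
rewrite /Qmat /Hmat /Mmat !blk1 mulmx_block !mul0mx !mulmx0 !addr0 !add0r.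
rewrite !mulmx1 mul_scalar_mx scalerA.
congr block_mx; congr (_ *: _).
by rewrite mulrN invfM mulrCA mulfV // mulr1.
Qed.

Lemma Gid eta r s (JX : 'M[R]_(p, n)) (JY : 'M[R]_(p, m)) : r != 0 -> eta != 0 ->
  let M := Mmat eta r JX JY in let Q := Qmat eta r s JX JY in
  let H := Hmat n m p r s in
  Q^T + Q - M^T *m H *m M = Gmat eta r s JX JY.
Proof.
move=> r0 e0 M Q H.
rewrite /M /Q /H /Qmat /Hmat /Mmat /Gmat !blk1 !tr_block_mx !trmx0 !tr_scalar_mx ?trmx1.
rewrite !mulmx_block !mul0mx !mulmx0 !addr0 !add0r ?mulmx1 ?mul1mx.
rewrite !add_block_mx opp_block_mx add_block_mx.
have te : r * (eta * r)^-1 = eta^-1 by rewrite invfM mulrCA mulfV // mulr1.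
congr block_mx.
- by rewrite addrK.
- by rewrite add0r addr0 mul_scalar_mx scalerA mulrN te subrr.
- rewrite addr0 mul_mx_scalar !linearZ /= scalerA mulrN te scalerN !scaleNr opprK.
  by rewrite addNr.
- rewrite mul_mx_scalar !linearZ /= -!scalemxAl !scalerA tr_col_mx !trmxK mul_row_col.
  rewrite [_ *: _ + s%:M]addrC opprD addrA addrK scalerN; congr (_ - _ *: _).
  by field; rewrite r0 e0.
Qed.
End S4.
Section S5.
Variable R : realType.
Variables n m p : nat.

Lemma tr_bound k l (J : 'M[R]_(k, l)) (v : 'cV[R]_k) :
  dot (J^T *m v) (J^T *m v) <= specnorm J ^+ 2 * dot v v.
Proof.
set u := J^T *m v.
have h1 : dot u u <= enorm v * (specnorm J * enorm u).
  rewrite {1}/u dot_mull trmxK.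
  apply: le_trans (CS _ _) _; apply: ler_wpM2l; first exact: enorm_ge0.
  exact: specnorm_le.
rewrite -!enorm_sq; rewrite -enorm_sq in h1.
have hu := enorm_ge0 u; have hv := enorm_ge0 v; have hK := specnorm_ge0 J.
have [u0|up] := eqVneq (enorm u) 0.
  by rewrite u0 expr0n /= mulr_ge0 // exprn_ge0.
have upos : 0 < enorm u by rewrite lt0r up hu.
have : enorm u <= specnorm J * enorm v.
  rewrite -(ler_pM2r upos) -expr2; apply: le_trans h1 _; lra.
move=> h; rewrite -exprMn !expr2.
have := mulr_ge0 hK hv; nra.
Qed.

Lemma wsplit (v : 'cV[R]_(n + m + p)) :
  v = wvec (usubmx (usubmx v)) (dsubmx (usubmx v)) (dsubmx v).
Proof. by rewrite /wvec !vsubmxK. Qed.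

Lemma dot_gt0 k (a : 'cV[R]_k) : a != 0 -> 0 < dot a a.
Proof.
move=> a0; rewrite lt0r dot_ge0 andbT; apply/eqP => /dot0 h.
by rewrite h eqxx in a0.
Qed.

Lemma pos3 (a : 'cV[R]_n) (b : 'cV[R]_m) (c : 'cV[R]_p) : wvec a b c != 0 ->
  [\/ 0 < dot a a, 0 < dot b b | 0 < dot c c].
Proof.
move=> w0.
have [a0|a0] := eqVneq a 0; last by apply: Or31; exact: dot_gt0.
have [b0|b0] := eqVneq b 0; last by apply: Or32; exact: dot_gt0.
have [c0|c0] := eqVneq c 0; last by apply: Or33; exact: dot_gt0.
by move: w0; rewrite a0 b0 c0 /wvec !col_mx0 eqxx.
Qed.

Lemma posH (r s : R) : 0 < r -> 0 < s -> posdef (Hmat n m p r s).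
Proof.
move=> r0 s0; split.
  by rewrite /Hmat !tr_block_mx !trmx0 !tr_scalar_mx.
move=> v; rewrite [v]wsplit => /pos3 h; rewrite qf_H.
have := dot_ge0 (usubmx (usubmx v)); have := dot_ge0 (dsubmx (usubmx v));
have := dot_ge0 (dsubmx v).
case: h => h *; nra.
Qed.

Lemma posG eta r s (JX : 'M[R]_(p, n)) (JY : 'M[R]_(p, m)) :
  0 < r -> 0 < eta ->
  (eta ^+ 2 * r)^-1 * (specnorm JX ^+ 2 + specnorm JY ^+ 2) < s ->
  posdef (Gmat eta r s JX JY).
Proof.
move=> r0 e0 hs; split.
  rewrite /Gmat !tr_block_mx !trmx0 !tr_scalar_mx linearB /= linearZ /= linearD /=.
  by rewrite !trmx_mul !trmxK tr_scalar_mx.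
move=> v; rewrite [v]wsplit => /pos3 h; rewrite qf_G.
set a := usubmx (usubmx v); set b := dsubmx (usubmx v); set c := dsubmx v.
have hX := tr_bound JX c; have hY := tr_bound JY c.
have cpos : 0 < (eta ^+ 2 * r)^-1 by rewrite invr_gt0 mulr_gt0 // exprn_gt0.
have ha := dot_ge0 a; have hb := dot_ge0 b; have hc := dot_ge0 c.
set k := (eta ^+ 2 * r)^-1 in cpos hs *.
have : k * (dot (JX^T *m c) (JX^T *m c) + dot (JY^T *m c) (JY^T *m c))
       <= k * (specnorm JX ^+ 2 + specnorm JY ^+ 2) * dot c c.
  rewrite -mulrA; apply: ler_wpM2l; first exact: ltW.
  by rewrite mulrDl; apply: lerD.
move=> hk.
case: h => h; nra.
Qed.
End S5.
Section S6.
Variable R : realType.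

Lemma lam p (eta s : R) (l lk a b lb : 'cV[R]_p) : 0 < eta -> 0 < s -> nonneg l ->
  lb = \col_(i < p) Num.max (lk i 0 + (eta * s)^-1 * (a + b) i 0) 0 ->
  s * dot (l - lb) (lk - lb) <= dot (l - lb) (eta^-1 *: (- a - b)).
Proof.
move=> e0 s0 nl ->; rewrite -subr_ge0 !dotE mulr_sumr -sumrB.
apply: sumr_ge0 => i _; rewrite !mxE.
have li := nl i.
set c := a i 0 + b i 0.
have hc : - a i 0 - b i 0 = - c by rewrite /c opprD.
rewrite hc.
have st : s * (eta * s)^-1 = eta^-1 by rewrite invfM mulrCA mulfV ?gt_eqF // mulr1.
have ep : 0 < eta^-1 by rewrite invr_gt0.
set t := (eta * s)^-1 in st *.
rewrite -st.
have [h|h] := lerP (lk i 0 + t * c) 0.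
  have h2 : 0 <= s * - (lk i 0 + t * c) by rewrite mulr_ge0 // ?oppr_ge0 // ltW.
  have h3 := mulr_ge0 li h2.
  rewrite !subr0; nra.
have -> : lk i 0 - (lk i 0 + t * c) = - (t * c) by ring.
nra.
Qed.

Lemma scale_wvec n m p (e : R) (x : 'cV[R]_n) (y : 'cV[R]_m) (l : 'cV[R]_p) :
  e *: wvec x y l = wvec (e *: x) (e *: y) (e *: l).
Proof. by rewrite /wvec !scale_col_mx. Qed.
End S6.
Section S7.
Variable R : realType.

Lemma vec1 k (x xs xb v : 'cV[R]_k) (t : R) :
  x - (xs - (xs - xb - t *: v)) = (x - xb) - t *: v.
Proof. by apply/matrixP => i j; rewrite !mxE; ring. Qed.

Lemma xpart kk p (eta r : R) (J : 'M[R]_(p, kk)) (x xb xs : 'cV[R]_kk) (lk lb : 'cV[R]_p) :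
  r != 0 -> eta != 0 ->
  1 / 2 * (r * dot (x - (xs - (xs - xb - (eta * r)^-1 *: (J^T *m (lk - lb)))))
                   (x - (xs - (xs - xb - (eta * r)^-1 *: (J^T *m (lk - lb)))))
           - r * dot (x - xs) (x - xs))
  + 1 / 2 * (r * dot (xb - xs) (xb - xs)
           - (eta ^+ 2 * r)^-1 * dot (J^T *m (lb - lk)) (J^T *m (lb - lk)))
  = dot (x - xb) (eta^-1 *: (J^T *m lb)) - eta^-1 * dot (x - xb) (J^T *m lk)
    - r * dot (x - xb) (xb - xs).
Proof.
move=> r0 e0.
rewrite vec1.
have -> : J^T *m (lb - lk) = - (J^T *m (lk - lb)) by rewrite -mulmxN opprB.
have -> : x - xs = (x - xb) - (xs - xb) by apply/matrixP => i j; rewrite !mxE; ring.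
have -> : xb - xs = - (xs - xb) by apply/matrixP => i j; rewrite !mxE; ring.
have -> : J^T *m lb = J^T *m lk - J^T *m (lk - lb) by rewrite mulmxBr opprB addrC subrK.
set v := J^T *m (lk - lb); set P := J^T *m lk.
rewrite !(dotBl, dotBr, dotNl, dotNr, dotZl, dotZr, opprK).
rewrite (dotC xb x) (dotC v x) (dotC v xb) (dotC xs x) (dotC xs xb).
field; by rewrite r0 e0.
Qed.

Lemma lpart p (s : R) (l lk lb : 'cV[R]_p) :
  1 / 2 * (s * dot (l - (lk - (lk - lb))) (l - (lk - (lk - lb))) - s * dot (l - lk) (l - lk))
  + 1 / 2 * (s * dot (lb - lk) (lb - lk))
  = s * dot (l - lb) (lk - lb).
Proof.
have -> : lk - (lk - lb) = lb by apply/matrixP => i j; rewrite !mxE; ring.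
have -> : l - lk = (l - lb) - (lk - lb) by apply/matrixP => i j; rewrite !mxE; ring.
have -> : lb - lk = - (lk - lb) by apply/matrixP => i j; rewrite !mxE; ring.
set u := l - lb; set v := lk - lb.
rewrite !(dotBl, dotBr, dotNl, dotNr, opprK) ?(dotC v u).
rewrite (dotC lb l) (dotC lk l) (dotC lb lk); by field.
Qed.
End S7.
Unset Implicit Arguments.

Theorem lemma4p2 (R : realType) (n m p : nat)
  (X : set 'cV[R]_n) (Y : set 'cV[R]_m)
  (f : 'cV[R]_n -> R) (g : 'cV[R]_m -> R)
  (phi : 'I_p -> 'cV[R]_n -> R) (psi : 'I_p -> 'cV[R]_m -> R)
  (rho mu : R) (eta : nat -> R)
  (xs xb : nat -> 'cV[R]_n) (ys yb : nat -> 'cV[R]_m)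
  (ls lb : nat -> 'cV[R]_p) :
  X !=set0 -> closed X -> convex_set X ->
  Y !=set0 -> closed Y -> convex_set Y ->
  convex_function setT f -> convex_function setT g ->
  convex_C1 phi -> convex_C1 psi ->
  0 < rho -> 1 < mu -> (forall k, 0 < eta k) ->
  (* w^0 in Omega *)
  X (xs 0%N) -> Y (ys 0%N) -> nonneg (ls 0%N) ->
  (* standing assumption R(u^k) > 0, R(ubar^k) > 0 *)
  (forall k, 0 < Rfun phi psi (xs k) (ys k)) ->
  (forall k, 0 < Rfun phi psi (xb k) (yb k)) ->
  let r k := (eta k)^-1 * Num.sqrt (Rfun phi psi (xs k) (ys k)) in
  let s k := mu * Rfun phi psi (xb k) (yb k)
             / (eta k * Num.sqrt (Rfun phi psi (xs k) (ys k))) in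
  (* xbar^k = argmin over X *)
  (forall k, X (xb k) /\ forall x, X x ->
     rho * f (xb k) + (eta k)^-1 * ((ls k)^T *m vfun phi (xb k)) 0 0
       + r k / 2 * enorm (xb k - xs k) ^+ 2
     <= rho * f x + (eta k)^-1 * ((ls k)^T *m vfun phi x) 0 0
       + r k / 2 * enorm (x - xs k) ^+ 2) ->
  (* ybar^k = argmin over Y *)
  (forall k, Y (yb k) /\ forall y, Y y ->
     rho * g (yb k) + (eta k)^-1 * ((ls k)^T *m vfun psi (yb k)) 0 0
       + r k / 2 * enorm (yb k - ys k) ^+ 2
     <= rho * g y + (eta k)^-1 * ((ls k)^T *m vfun psi y) 0 0
       + r k / 2 * enorm (y - ys k) ^+ 2) ->
  (* lambdabar^k *)
  (forall k, lb k = \col_(i < p) Num.max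
     (ls k i 0 + (eta k * s k)^-1
        * (vfun phi (xb k) + vfun psi (yb k)) i 0) 0) ->
  (* correction step w^{k+1} = w^k - M_k (w^k - wbar^k) *)
  (forall k, wvec (xs k.+1) (ys k.+1) (ls k.+1) =
     wvec (xs k) (ys k) (ls k)
     - Mmat (eta k) (r k) (jac phi (xb k)) (jac psi (yb k))
       *m (wvec (xs k) (ys k) (ls k) - wvec (xb k) (yb k) (lb k))) ->
  forall k,
    let Mk := Mmat (eta k) (r k) (jac phi (xb k)) (jac psi (yb k)) in
    let Qk := Qmat (eta k) (r k) (s k) (jac phi (xb k)) (jac psi (yb k)) in
    let Hk := Hmat n m p (r k) (s k) in
    let Gk := Gmat (eta k) (r k) (s k) (jac phi (xb k)) (jac psi (yb k)) in
    let wk := wvec (xs k) (ys k) (ls k) in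
    let wk1 := wvec (xs k.+1) (ys k.+1) (ls k.+1) in
    let wbk := wvec (xb k) (yb k) (lb k) in
    Mk \in unitmx /\ Qk *m invmx Mk = Hk /\ posdef Hk /\
    Qk^T + Qk - Mk^T *m Hk *m Mk = Gk /\ posdef Gk /\
        (forall x y l, X x -> Y y -> nonneg l ->
          let w := wvec x y l in
          rho * ((f x + g y) - (f (xb k) + g (yb k)))
            + ((w - wbk)^T *m ((eta k)^-1
                 *: Gamma phi psi (xb k) (yb k) (lb k))) 0 0
          >= 1 / 2 * (qf Hk (w - wk1) - qf Hk (w - wk))
             + 1 / 2 * qf Gk (wbk - wk)).

Proof.
move=> hX0 cX convX hY0 cY convY cf cg [cphi [dphi _]] [cpsi [dpsi _]] rho0 mu1 eta0
  X0 Y0 L0 Ru Rb r s hxb hyb hlb hstep k Mk Qk Hk Gk wk wk1 wbk.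
have e0 := eta0 k.
have Sp : 0 < Num.sqrt (Rfun phi psi (xs k) (ys k)) by rewrite sqrtr_gt0.
have rp : 0 < r k by rewrite /r mulr_gt0 // invr_gt0.
have sp : 0 < s k.
  by rewrite /s divr_gt0 ?mulr_gt0 // (lt_trans ltr01 mu1).
have r0 : r k != 0 by rewrite gt_eqF.
have eN0 : eta k != 0 by rewrite gt_eqF.
have Mu : Mk \in unitmx by exact: M_unit.
split => //.
split; first by rewrite /Qk QHM // mulmxK.
split; first exact: posH.
split; first exact: Gid.
split.
  apply: posG => //.
  have -> : (eta k ^+ 2 * r k)^-1 = (eta k * Num.sqrt (Rfun phi psi (xs k) (ys k)))^-1.
    by rewrite /r; field; rewrite gt_eqF // gt_eqF.
  rewrite /s -/(Rfun phi psi (xb k) (yb k)).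
  set t := (eta k * _)^-1.
  have tp : 0 < t by rewrite invr_gt0 mulr_gt0.
  move: (Rb k) => hb; have := mulr_gt0 hb tp; nra.
move=> x y l Xx Yy nl; cbv zeta.
rewrite -/(dot (wvec x y l - wbk) _).
rewrite /wk1 hstep /wk /wbk /Mk !wvecB Mmul !wvecB /Gamma scale_wvec dot_wvec.
rewrite /Hk /Gk !qf_H qf_G.
have hx := xpart (jac phi (xb k)) x (xb k) (xs k) (ls k) (lb k) r0 eN0.
have hy := xpart (jac psi (yb k)) y (yb k) (ys k) (ls k) (lb k) r0 eN0.
have hl := lpart (s k) l (ls k) (lb k).
have ox := opt convX cf dphi (ltW rho0) (hxb k).1 (hxb k).2 Xx.
have oy := opt convY cg dpsi (ltW rho0) (hyb k).1 (hyb k).2 Yy.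
have ol := lam e0 sp nl (hlb k).
lra.
Qed.
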